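(* (Injectivity of the surface-aligned representation.) For $\mathbf{x}\in\mathbb{R}^3\setminus\mathbb{I}$ define $\mathcal{X}(\mathbf{x})=(\mathbf{s}_c,h)\in\mathbb{R}^4$, where $\mathbf{s}$ is the dispersed projection of $\mathbf{x}$ onto the posed mesh $\mathcal{M}$, $h$ is the signed height ($h=\|\mathbf{x}-\mathbf{s}\|$ if $\mathbf{x}$ is outside the region enclosed by $\mathcal{M}$, $h=-\|\mathbf{x}-\mathbf{s}\|$ if inside), and $\mathbf{s}_c$ is the point of the T-pose mesh $\mathcal{M}_c$ with the same face and the same barycentric coordinates as $\mathbf{s}$. Then the map $\mathbf{x}\mapsto\mathcal{X}(\mathbf{x})$ is injective on $\mathbb{R}^3\setminus\mathbb{I}$.
   Context: Let $\mathcal{M}$ be a triangle mesh in $\mathbb{R}^3$ that is watertight (closed, without self-intersections) and has no faces of zero area. Each face $T=(\mathbf{v}_1,\mathbf{v}_2,\mathbf{v}_3)$ has an outward unit face normal $\mathbf{n}_T$; each vertex $\mathbf{v}$ has a unit vertex normal $\mathbf{n}_{\mathbf{v}}$, and for every face $T$ and every vertex $\mathbf{v}$ of $T$, $\langle \mathbf{n}_{\mathbf{v}},\mathbf{n}_T\rangle>0$. $\mathcal{M}_c$ is a second watertight triangle mesh without zero-area faces having the same combinatorial structure (same faces, vertex indexing) as $\mathcal{M}$ but different vertex positions; for $\mathbf{s}=\sum_i\alpha_i\mathbf{v}_i$ in face $T$ of $\mathcal{M}$, $\mathbf{s}_c=\sum_i\alpha_i\mathbf{v}^c_i$ in the corresponding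 face of $\mathcal{M}_c$. Vertex normal alignment of a face $T$ with orientation $\sigma\in\{+1,-1\}$: put $\mathbf{m}_T=\sigma\mathbf{n}_T$; for each $i\in\{1,2,3\}$ let $j,k$ be the other two indices, $\mathbf{e}_1=\mathbf{v}_j-\mathbf{v}_i$, $\mathbf{e}_2=\mathbf{v}_k-\mathbf{v}_i$, $\mathbf{m}_i=\sigma\mathbf{n}_{\mathbf{v}_i}$, write the in-plane part $\mathbf{m}_i-\langle\mathbf{m}_i,\mathbf{m}_T\rangle\mathbf{m}_T=c_1\mathbf{e}_1+c_2\mathbf{e}_2$, and define the aligned normal $\hat{\mathbf{n}}^{T,\sigma}_i=(\mathbf{m}_i-\max(0,c_1)\mathbf{e}_1-\max(0,c_2)\mathbf{e}_2)/\|\mathbf{m}_i-\max(0,c_1)\mathbf{e}_1-\max(0,c_2)\mathbf{e}_2\|$. (Aligned normals depend on the face $T$, not only on the vertex.) Barycentric interpolated projection onto $T$ with orientation $\sigma$: for $\mathbf{x}$ with $l:=\langle\mathbf{x}-\mathbf{v}_1,\sigma\mathbf{n}_T\rangle\ge 0$, set $\mathbf{v}_i'=\mathbf{v}_i+\big(l/\langle\hat{\mathbf{n}}^{T,\sigma}_i,\sigma\mathbf{n}_T\rangle\big)\hat{\mathbf{n}}^{T,\sigma}_i$, forming the parallel triangle $T'=(\mathbf{v}_1',\mathbf{v}_2',\mathbf{v}_3')$ in the plane through $\mathbf{x}$ parallel to $T$. If $\mathbf{x}\in T'$, i.e. $\mathbf{x}=\sum_i\alpha_i\mathbf{v}_i'$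 with $\alpha_i\ge0$, $\sum_i\alpha_i=1$, the projection is $\mathbf{s}_T=\sum_i\alpha_i\mathbf{v}_i$. Dispersed projection of $\mathbf{x}$ (with $\sigma=+1$ if $\mathbf{x}$ is outside the region enclosed by $\mathcal{M}$ and $\sigma=-1$ if inside): (1) compute the nearest point $\tilde{\mathbf{s}}$ of $\mathcal{M}$ to $\mathbf{x}$; (2) let $\mathcal{T}$ be the set of faces containing $\tilde{\mathbf{s}}$; (3) apply vertex normal alignment with orientation $\sigma$ to each $T\in\mathcal{T}$; (4) discard those $T$ with $\mathbf{x}\notin T'$; (5) compute $\mathbf{s}_T$ for the remaining $T$; (6) let $\mathbf{s}$ be the $\mathbf{s}_T$ nearest to $\mathbf{x}$. It is assumed that for every $\mathbf{x}\in\mathbb{R}^3$ at least one face survives step (4), so $\mathbf{s}$ is defined. Exceptional set: for a face $T$, orientation $\sigma$, and $\mathbf{a}^{T,\sigma}_i=\hat{\mathbf{n}}^{T,\sigma}_i/\langle\hat{\mathbf{n}}^{T,\sigma}_i,\sigma\mathbf{n}_T\rangle$, let $\mathbb{I}$ be the union over all faces $T$, both $\sigma$, and all pairs of distinct vertices $\mathbf{v}_i,\mathbf{v}_j$ of $T$ of the bilinear surfaces $\{(1-u)\mathbf{v}_i+u\mathbf{v}_j+t((1-u)\mathbf{a}^{T,\sigma}_i+u\mathbf{a}^{T,\sigma}_j): u\in[0,1],t\ge0\}$ (a set of Lebesgue measure zero). For $\mathbf{x}\notin\mathbb{I}$, the dispersed projection $\mathbf{s}$ lies in the relative interior of a face.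 *)

(* Defs.v *)
From Stdlib Require Import Reals Lra List.
Open Scope R_scope.

Record R3 := mkR3 { px : R; py : R; pz : R }.

Definition vadd (u v : R3) : R3 := mkR3 (px u + px v) (py u + py v) (pz u + pz v).
Definition vsub (u v : R3) : R3 := mkR3 (px u - px v) (py u - py v) (pz u - pz v).
Definition vscale (a : R) (u : R3) : R3 := mkR3 (a * px u) (a * py u) (a * pz u).
Definition dot (u v : R3) : R := px u * px v + py u * py v + pz u * pz v.
Definition cross (u v : R3) : R3 :=
  mkR3 (py u * pz v - pz u * py v) (pz u * px v - px u * pz v) (px u * py v - py u * px v).
Definition vnorm (u : R3) : R := sqrt (dot u u).

Definition bary3 := (R * R * R)%type.
Definition b1 (a : bary3) : R := fst (fst a).
Definition b2 (a : bary3) : R := snd (fst a).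
Definition b3 (a : bary3) : R := snd a.
Definition is_bary (a : bary3) : Prop :=
  0 <= b1 a /\ 0 <= b2 a /\ 0 <= b3 a /\ b1 a + b2 a + b3 a = 1.
Definition comb3 (p q r : R3) (a : bary3) : R3 :=
  vadd (vadd (vscale (b1 a) p) (vscale (b2 a) q)) (vscale (b3 a) r).

(* The posed mesh M and
   the T-pose mesh M_c share the face list F and differ in their positions. *)
Definition face := (nat * nat * nat)%type.
Definition fvert (T : face) (i : nat) : nat :=
  match i with 0 => fst (fst T) | 1 => snd (fst T) | _ => snd T end.
Definition fpos (V : nat -> R3) (T : face) (i : nat) : R3 := V (fvert T i).

Definition bary_point (V : nat -> R3) (T : face) (a : bary3) : R3 :=
  comb3 (fpos V T 0) (fpos V T 1) (fpos V T 2) a.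

Definition in_face (V : nat -> R3) (T : face) (x : R3) : Prop :=
  exists a, is_bary a /\ x = bary_point V T a.

Definition on_mesh (V : nat -> R3) (F : list face) (x : R3) : Prop :=
  exists T, In T F /\ in_face V T x.

Definition nondegenerate (V : nat -> R3) (T : face) : Prop :=
  vnorm (cross (vsub (fpos V T 1) (fpos V T 0)) (vsub (fpos V T 2) (fpos V T 0))) > 0.

(* unit face normal (faces are oriented; outwardness is a separate hypothesis) *)
Definition fnormal (V : nat -> R3) (T : face) : R3 :=
  let c := cross (vsub (fpos V T 1) (fpos V T 0)) (vsub (fpos V T 2) (fpos V T 0)) in
  vscale (/ vnorm c) c.

Definition has_vertex (T : face) (n : nat) : bool :=
  (Nat.eqb (fvert T 0) n || Nat.eqb (fvert T 1) n || Nat.eqb (fvert T 2) n)%bool.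
Definition has_edge (T : face) (m n : nat) : bool :=
  (has_vertex T m && has_vertex T n)%bool.

Definition closed_mesh (F : list face) : Prop :=
  forall T, In T F -> forall i, (i < 3)%nat ->
    length (filter (fun T' => has_edge T' (fvert T i) (fvert T ((i + 1) mod 3))) F) = 2%nat.

Definition distinct_faces (F : list face) : Prop :=
  forall k1 k2, (k1 < length F)%nat -> (k2 < length F)%nat -> k1 <> k2 ->
    ~ (forall n, has_vertex (nth k1 F (0,0,0)%nat) n = has_vertex (nth k2 F (0,0,0)%nat) n).

(* no self-intersections: two distinct faces meet only in the convex hull of
   their common vertices (empty if there is none) *)
Definition no_self_intersection (V : nat -> R3) (F : list face) : Prop :=
  forall k1 k2, (k1 < length F)%nat -> (k2 < length F)%nat -> k1 <> k2 ->
    let T1 := nth k1 F (0,0,0)%nat in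
    let T2 := nth k2 F (0,0,0)%nat in
    forall x, in_face V T1 x -> in_face V T2 x ->
      exists a, is_bary a /\ x = bary_point V T1 a /\
        (has_vertex T2 (fvert T1 0) = false -> b1 a = 0) /\
        (has_vertex T2 (fvert T1 1) = false -> b2 a = 0) /\
        (has_vertex T2 (fvert T1 2) = false -> b3 a = 0).

Definition watertight (V : nat -> R3) (F : list face) : Prop :=
  closed_mesh F /\ distinct_faces F /\ no_self_intersection V F /\
  (forall T, In T F -> nondegenerate V T).

Definition path_avoiding (V : nat -> R3) (F : list face) (x y : R3) : Prop :=
  exists g : R -> R3,
    continuity (fun t => px (g t)) /\ continuity (fun t => py (g t)) /\
    continuity (fun t => pz (g t)) /\ g 0 = x /\ g 1 = y /\
    forall t, 0 <= t <= 1 -> ~ on_mesh V F (g t).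

(* x lies in the region enclosed by the mesh: x is off the surface and its
   (path-)component of the complement of the surface is bounded *)
Definition inside (V : nat -> R3) (F : list face) (x : R3) : Prop :=
  ~ on_mesh V F x /\
  exists r, forall y, path_avoiding V F x y -> vnorm y <= r.

Definition sigma_of (V : nat -> R3) (F : list face) (x : R3) (sg : R) : Prop :=
  (inside V F x /\ sg = -1) \/ (~ inside V F x /\ sg = 1).

Definition outward_oriented (V : nat -> R3) (F : list face) : Prop :=
  forall T, In T F -> forall a, is_bary a -> 0 < b1 a -> 0 < b2 a -> 0 < b3 a ->
    exists eps, eps > 0 /\ forall t, 0 < t < eps ->
      ~ inside V F (vadd (bary_point V T a) (vscale t (fnormal V T))) /\
      inside V F (vsub (bary_point V T a) (vscale t (fnormal V T))).

(* i in {0,1,2}; j, k are the other two indices.  The coefficients c1, c2 are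
   the (unique) coordinates of the in-plane part p in the basis e1, e2, written
   via the Gram system. *)
Definition aligned_normal (V N : nat -> R3) (T : face) (sg : R) (i : nat) : R3 :=
  let vi := fpos V T i in
  let e1 := vsub (fpos V T ((i + 1) mod 3)) vi in
  let e2 := vsub (fpos V T ((i + 2) mod 3)) vi in
  let mT := vscale sg (fnormal V T) in
  let mi := vscale sg (N (fvert T i)) in
  let p := vsub mi (vscale (dot mi mT) mT) in
  let g11 := dot e1 e1 in
  let g12 := dot e1 e2 in
  let g22 := dot e2 e2 in
  let det := g11 * g22 - g12 * g12 in
  let c1 := (dot p e1 * g22 - dot p e2 * g12) / det in
  let c2 := (dot p e2 * g11 - dot p e1 * g12) / det in
  let w := vsub (vsub mi (vscale (Rmax 0 c1) e1)) (vscale (Rmax 0 c2) e2) in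
  vscale (/ vnorm w) w.

Definition avec (V N : nat -> R3) (T : face) (sg : R) (i : nat) : R3 :=
  let n := aligned_normal V N T sg i in
  vscale (/ dot n (vscale sg (fnormal V T))) n.

(* x lies in the parallel triangle T' (with l >= 0) with barycentric coords a;
   the projection is then  bary_point V T a. *)
Definition bary_proj (V N : nat -> R3) (T : face) (sg : R) (x : R3) (a : bary3) : Prop :=
  let l := dot (vsub x (fpos V T 0)) (vscale sg (fnormal V T)) in
  0 <= l /\ is_bary a /\
  x = comb3 (vadd (fpos V T 0) (vscale l (avec V N T sg 0)))
            (vadd (fpos V T 1) (vscale l (avec V N T sg 1)))
            (vadd (fpos V T 2) (vscale l (avec V N T sg 2))) a.

Definition is_nearest (V : nat -> R3) (F : list face) (x s : R3) : Prop :=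
  on_mesh V F s /\ forall y, on_mesh V F y -> vnorm (vsub x s) <= vnorm (vsub x y).

Definition survives (V N : nat -> R3) (F : list face) (sg : R) (x st : R3)
  (T : face) (a : bary3) : Prop :=
  In T F /\ in_face V T st /\ bary_proj V N T sg x a.

Definition dispersed_proj (V N : nat -> R3) (F : list face) (x : R3)
  (T : face) (a : bary3) : Prop :=
  exists sg st, sigma_of V F x sg /\ is_nearest V F x st /\
    survives V N F sg x st T a /\
    forall T' a', survives V N F sg x st T' a' ->
      vnorm (vsub x (bary_point V T a)) <= vnorm (vsub x (bary_point V T' a')).

Definition exceptional (V N : nat -> R3) (F : list face) (x : R3) : Prop :=
  exists T sg i j u t, In T F /\ (sg = 1 \/ sg = -1) /\
    (i < 3)%nat /\ (j < 3)%nat /\ i <> j /\ 0 <= u <= 1 /\ 0 <= t /\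
    x = vadd (vadd (vscale (1 - u) (fpos V T i)) (vscale u (fpos V T j)))
             (vscale t (vadd (vscale (1 - u) (avec V N T sg i))
                             (vscale u (avec V N T sg j)))).

Definition surf_rep (V Vc N : nat -> R3) (F : list face) (x : R3) (p : R3 * R) : Prop :=
  exists sg T a, sigma_of V F x sg /\ dispersed_proj V N F x T a /\
    p = (bary_point Vc T a, sg * vnorm (vsub x (bary_point V T a))).

(* Main.v *)
Require Import Defs.
From Stdlib Require Import Reals List.
From Stdlib Require Import Lra Classical.
Open Scope R_scope.

Lemma R3_eq u v : px u = px v -> py u = py v -> pz u = pz v -> u = v.
Proof. destruct u, v; simpl; intros; subst; reflexivity. Qed.

Lemma lin_indep (e1x e1y e1z e2x e2y e2z d2 d3 : R) :
  d2*e1x + d3*e2x = 0 -> d2*e1y + d3*e2y = 0 -> d2*e1z + d3*e2z = 0 ->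
  (e1y*e2z - e1z*e2y)*(e1y*e2z - e1z*e2y) + (e1z*e2x - e1x*e2z)*(e1z*e2x - e1x*e2z)
  + (e1x*e2y - e1y*e2x)*(e1x*e2y - e1y*e2x) > 0 -> d2 = 0 /\ d3 = 0.
Proof.
  intros H1 H2 H3 Hc.
  set (cx := e1y*e2z - e1z*e2y) in *.
  set (cy := e1z*e2x - e1x*e2z) in *.
  set (cz := e1x*e2y - e1y*e2x) in *.
  assert (A1 : d2*cx = e2z*(d2*e1y + d3*e2y) - e2y*(d2*e1z+d3*e2z)) by (unfold cx; ring).
  assert (A2 : d2*cy = e2x*(d2*e1z + d3*e2z) - e2z*(d2*e1x+d3*e2x)) by (unfold cy; ring).
  assert (A3 : d2*cz = e2y*(d2*e1x + d3*e2x) - e2x*(d2*e1y+d3*e2y)) by (unfold cz; ring).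
  assert (B1 : d3*cx = e1y*(d2*e1z + d3*e2z) - e1z*(d2*e1y+d3*e2y)) by (unfold cx; ring).
  assert (B2 : d3*cy = e1z*(d2*e1x + d3*e2x) - e1x*(d2*e1z+d3*e2z)) by (unfold cy; ring).
  assert (B3 : d3*cz = e1x*(d2*e1y + d3*e2y) - e1y*(d2*e1x+d3*e2x)) by (unfold cz; ring).
  rewrite ?H1, ?H2, ?H3 in A1; rewrite ?H1, ?H2, ?H3 in A2; rewrite ?H1, ?H2, ?H3 in A3;
  rewrite ?H1, ?H2, ?H3 in B1; rewrite ?H1, ?H2, ?H3 in B2; rewrite ?H1, ?H2, ?H3 in B3.
  assert (E2 : d2*d2*(cx*cx+cy*cy+cz*cz) = 0).
  { replace (d2*d2*(cx*cx+cy*cy+cz*cz)) with ((d2*cx)*(d2*cx)+(d2*cy)*(d2*cy)+(d2*cz)*(d2*cz)) by ring.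
    rewrite A1, A2, A3; ring. }
  assert (E3 : d3*d3*(cx*cx+cy*cy+cz*cz) = 0).
  { replace (d3*d3*(cx*cx+cy*cy+cz*cz)) with ((d3*cx)*(d3*cx)+(d3*cy)*(d3*cy)+(d3*cz)*(d3*cz)) by ring.
    rewrite B1, B2, B3; ring. }
  split.
  - apply Rmult_integral in E2; destruct E2 as [E|E]; [|lra].
    apply Rmult_integral in E; destruct E; auto.
  - apply Rmult_integral in E3; destruct E3 as [E|E]; [|lra].
    apply Rmult_integral in E; destruct E; auto.
Qed.

Lemma dot_pos_of_norm c : vnorm c > 0 -> dot c c > 0.
Proof.
  unfold vnorm; intros H. destruct (Rle_lt_dec (dot c c) 0) as [h|h]; auto.
  rewrite sqrt_neg_0 in H; lra.
Qed.

Lemma comb_unique p q r a a' :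
  dot (cross (vsub q p) (vsub r p)) (cross (vsub q p) (vsub r p)) > 0 ->
  is_bary a -> is_bary a' -> comb3 p q r a = comb3 p q r a' -> a = a'.
Proof.
  destruct a as [[a1 a2] a3], a' as [[a1' a2'] a3'], p as [p1 p2 p3],
    q as [q1 q2 q3], r as [r1 r2 r3].
  unfold is_bary, b1, b2, b3, comb3, vadd, vscale, dot, cross, vsub; simpl.
  intros Hc (_&_&_&Hs) (_&_&_&Hs') E. injection E as E1 E2 E3.
  assert (h1: a1 = 1 - a2 - a3) by lra. assert (h1': a1' = 1 - a2' - a3') by lra.
  subst a1 a1'. unfold b1, b2, b3 in *; simpl in *.
  destruct (lin_indep (q1-p1) (q2-p2) (q3-p3) (r1-p1) (r2-p2) (r3-p3) (a2-a2') (a3-a3'))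
    as [D2 D3].
  - assert (X: (a2 - a2') * (q1 - p1) + (a3 - a3') * (r1 - p1) =
      ((1 - a2 - a3) * p1 + a2 * q1 + a3 * r1) - ((1 - a2' - a3') * p1 + a2' * q1 + a3' * r1)) by ring.
    rewrite X, E1; ring.
  - assert (X: (a2 - a2') * (q2 - p2) + (a3 - a3') * (r2 - p2) =
      ((1 - a2 - a3) * p2 + a2 * q2 + a3 * r2) - ((1 - a2' - a3') * p2 + a2' * q2 + a3' * r2)) by ring.
    rewrite X, E2; ring.
  - assert (X: (a2 - a2') * (q3 - p3) + (a3 - a3') * (r3 - p3) =
      ((1 - a2 - a3) * p3 + a2 * q3 + a3 * r3) - ((1 - a2' - a3') * p3 + a2' * q3 + a3' * r3)) by ring.
    rewrite X, E3; ring.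
  - exact Hc.
  - assert (a2 = a2') by lra. assert (a3 = a3') by lra. subst; reflexivity.
Qed.

Lemma bary_unique (W : nat -> R3) T a a' :
  nondegenerate W T -> is_bary a -> is_bary a' ->
  bary_point W T a = bary_point W T a' -> a = a'.
Proof.
  intros Hn. apply dot_pos_of_norm in Hn. intros. eapply comb_unique; eauto.
Qed.

Lemma sigma_unique W F x s1 s2 : sigma_of W F x s1 -> sigma_of W F x s2 -> s1 = s2.
Proof. unfold sigma_of; intros [[? ?]|[? ?]] [[? ?]|[? ?]]; subst; tauto || lra. Qed.

Lemma sigma_pm W F x s : sigma_of W F x s -> s = 1 \/ s = -1.
Proof. unfold sigma_of; intros [[? ?]|[? ?]]; auto. Qed.

Lemma comb_edge3 p q r A0 A1 A2 l a : is_bary a -> b3 a = 0 ->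
  comb3 (vadd p (vscale l A0)) (vadd q (vscale l A1)) (vadd r (vscale l A2)) a =
  vadd (vadd (vscale (1 - b2 a) p) (vscale (b2 a) q))
       (vscale l (vadd (vscale (1 - b2 a) A0) (vscale (b2 a) A1))).
Proof.
  destruct a as [[a1 a2] a3]; unfold is_bary, b1, b2, b3; simpl.
  intros (_&_&_&Hs) H3; subst a3. replace a1 with (1 - a2) by lra.
  apply R3_eq; unfold comb3, vadd, vscale, b1, b2, b3; simpl; ring.
Qed.

Lemma comb_edge2 p q r A0 A1 A2 l a : is_bary a -> b2 a = 0 ->
  comb3 (vadd p (vscale l A0)) (vadd q (vscale l A1)) (vadd r (vscale l A2)) a =
  vadd (vadd (vscale (1 - b3 a) p) (vscale (b3 a) r))
       (vscale l (vadd (vscale (1 - b3 a) A0) (vscale (b3 a) A2))).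
Proof.
  destruct a as [[a1 a2] a3]; unfold is_bary, b1, b2, b3; simpl.
  intros (_&_&_&Hs) H3; subst a2. replace a1 with (1 - a3) by lra.
  apply R3_eq; unfold comb3, vadd, vscale, b1, b2, b3; simpl; ring.
Qed.

Lemma comb_edge1 p q r A0 A1 A2 l a : is_bary a -> b1 a = 0 ->
  comb3 (vadd p (vscale l A0)) (vadd q (vscale l A1)) (vadd r (vscale l A2)) a =
  vadd (vadd (vscale (1 - b3 a) q) (vscale (b3 a) r))
       (vscale l (vadd (vscale (1 - b3 a) A1) (vscale (b3 a) A2))).
Proof.
  destruct a as [[a1 a2] a3]; unfold is_bary, b1, b2, b3; simpl.
  intros (_&_&_&Hs) H3; subst a1. replace a2 with (1 - a3) by lra.
  apply R3_eq; unfold comb3, vadd, vscale, b1, b2, b3; simpl; ring.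
Qed.

Lemma pos_of_not_exc V N F sg x st T a :
  (sg = 1 \/ sg = -1) -> survives V N F sg x st T a -> ~ exceptional V N F x ->
  0 < b1 a /\ 0 < b2 a /\ 0 < b3 a.
Proof.
  intros Hsg (HT & _ & Hp) Hex. unfold bary_proj in Hp; cbv zeta in Hp.
  destruct Hp as (Hl & Hb & Hx).
  pose proof Hb as (h1 & h2 & h3 & hs).
  split; [|split].
  - destruct (Rle_lt_or_eq_dec _ _ h1) as [|E]; auto. exfalso; apply Hex.
    exists T, sg, 1%nat, 2%nat, (b3 a),
      (dot (vsub x (fpos V T 0)) (vscale sg (fnormal V T))).
    repeat split; auto; try lra. rewrite Hx at 1. apply comb_edge1; auto.
  - destruct (Rle_lt_or_eq_dec _ _ h2) as [|E]; auto. exfalso; apply Hex.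
    exists T, sg, 0%nat, 2%nat, (b3 a),
      (dot (vsub x (fpos V T 0)) (vscale sg (fnormal V T))).
    repeat split; auto; try lra. rewrite Hx at 1. apply comb_edge2; auto.
  - destruct (Rle_lt_or_eq_dec _ _ h3) as [|E]; auto. exfalso; apply Hex.
    exists T, sg, 0%nat, 1%nat, (b2 a),
      (dot (vsub x (fpos V T 0)) (vscale sg (fnormal V T))).
    repeat split; auto; try lra. rewrite Hx at 1. apply comb_edge3; auto.
Qed.

Lemma side W F k1 k2 n a a' :
  no_self_intersection W F -> (forall T, In T F -> nondegenerate W T) ->
  (k1 < length F)%nat -> (k2 < length F)%nat -> k1 <> k2 ->
  has_vertex (nth k1 F (0,0,0)%nat) n = true ->
  has_vertex (nth k2 F (0,0,0)%nat) n = false ->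
  is_bary a -> 0 < b1 a -> 0 < b2 a -> 0 < b3 a -> is_bary a' ->
  bary_point W (nth k1 F (0,0,0)%nat) a = bary_point W (nth k2 F (0,0,0)%nat) a' -> False.
Proof.
  intros Hns Hnd h1 h2 hne E1 E2 Hb p1 p2 p3 Hb' Heq.
  destruct (Hns k1 k2 h1 h2 hne (bary_point W (nth k1 F (0,0,0)%nat) a))
    as (a'' & Hb'' & Hx & c1 & c2 & c3).
  - exists a; auto.
  - exists a'; auto.
  - assert (Ha : a = a'').
    { eapply bary_unique; eauto. apply Hnd. apply nth_In; auto. }
    subst a''.
    unfold has_vertex in E1.
    apply Bool.orb_true_iff in E1; destruct E1 as [E1|E1];
      [apply Bool.orb_true_iff in E1; destruct E1 as [E1|E1]|];
      apply PeanoNat.Nat.eqb_eq in E1; rewrite E1 in *.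
    + specialize (c1 E2); lra.
    + specialize (c2 E2); lra.
    + specialize (c3 E2); lra.
Qed.

Lemma face_unique W F T T' a a' :
  watertight W F -> In T F -> In T' F ->
  is_bary a -> 0 < b1 a -> 0 < b2 a -> 0 < b3 a ->
  is_bary a' -> 0 < b1 a' -> 0 < b2 a' -> 0 < b3 a' ->
  bary_point W T a = bary_point W T' a' -> T = T' /\ a = a'.
Proof.
  intros (_ & Hd & Hns & Hnd) HT HT' Hb p1 p2 p3 Hb' q1 q2 q3 Heq.
  destruct (In_nth F T (0,0,0)%nat HT) as (k1 & h1 & e1).
  destruct (In_nth F T' (0,0,0)%nat HT') as (k2 & h2 & e2).
  destruct (PeanoNat.Nat.eq_dec k1 k2) as [->|hne].
  - rewrite e1 in e2; subst T'. split; auto.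
    eapply bary_unique; eauto.
  - exfalso. apply (Hd k1 k2 h1 h2 hne). intros n.
    destruct (has_vertex (nth k1 F (0,0,0)%nat) n) eqn:E1,
             (has_vertex (nth k2 F (0,0,0)%nat) n) eqn:E2; auto.
    + exfalso. eapply (side W F k1 k2 n a a'); eauto. rewrite e1, e2; auto.
    + exfalso. eapply (side W F k2 k1 n a' a); eauto. rewrite e1, e2; auto.
Qed.

Definition w3 (V N : nat -> R3) T sg a :=
  comb3 (avec V N T sg 0) (avec V N T sg 1) (avec V N T sg 2) a.

Lemma proj_decomp V N T sg x a : bary_proj V N T sg x a ->
  exists l, 0 <= l /\ x = vadd (bary_point V T a) (vscale l (w3 V N T sg a)).
Proof.
  unfold bary_proj; cbv zeta. intros (Hl & _ & Hx).
  eexists; split; [exact Hl|]. rewrite Hx at 1. unfold bary_point, w3.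
  apply R3_eq; unfold comb3, vadd, vscale; simpl; ring.
Qed.

Lemma dot_nonneg w : 0 <= dot w w.
Proof. unfold dot. nra. Qed.

Lemma norm_scale l w : 0 <= l -> vnorm (vscale l w) = l * vnorm w.
Proof.
  intros Hl. unfold vnorm.
  replace (dot (vscale l w) (vscale l w)) with ((l*l) * dot w w)
    by (unfold dot, vscale; simpl; ring).
  rewrite sqrt_mult; [|nra|apply dot_nonneg]. rewrite sqrt_square; auto.
Qed.

Lemma vsub_vadd s v : vsub (vadd s v) s = v.
Proof. apply R3_eq; unfold vsub, vadd; simpl; ring. Qed.

Lemma scale_zero l w : l * vnorm w = 0 -> vscale l w = mkR3 0 0 0.
Proof.
  intros H. apply Rmult_integral in H; destruct H as [->|H].
  - apply R3_eq; unfold vscale; simpl; ring.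
  - unfold vnorm in H. apply sqrt_eq_0 in H; [|apply dot_nonneg].
    unfold dot in H. destruct w as [w1 w2 w3]; simpl in H.
    assert (w1 = 0) by nra. assert (w2 = 0) by nra. assert (w3 = 0) by nra.
    subst. apply R3_eq; unfold vscale; simpl; ring.
Qed.

Theorem mainTheorem4 (V Vc N : nat -> R3) (F : list face) :
  watertight V F ->
  watertight Vc F ->
  outward_oriented V F ->
  (forall T i, In T F -> (i < 3)%nat -> vnorm (N (fvert T i)) = 1) ->
  (forall T i, In T F -> (i < 3)%nat -> dot (N (fvert T i)) (fnormal V T) > 0) ->
  (* for every x at least one face survives step (4) *)
  (forall x sg st, sigma_of V F x sg -> is_nearest V F x st ->
     exists T a, survives V N F sg x st T a) ->
  forall x y p,
    ~ exceptional V N F x -> ~ exceptional V N F y ->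
    surf_rep V Vc N F x p -> surf_rep V Vc N F y p ->
    x = y.
Proof.
  intros WV WVc _ _ _ _ x y p Hex Hey Hrx Hry.
  destruct Hrx as (sgx & Tx & ax & Hsx & Hdx & Hpx).
  destruct Hdx as (sgx' & stx & Hsx' & _ & Hsvx & _).
  destruct Hry as (sgy & Ty & ay & Hsy & Hdy & Hpy).
  destruct Hdy as (sgy' & sty & Hsy' & _ & Hsvy & _).
  pose proof (sigma_unique _ _ _ _ _ Hsx' Hsx); subst sgx'.
  pose proof (sigma_unique _ _ _ _ _ Hsy' Hsy); subst sgy'.
  pose proof (sigma_pm _ _ _ _ Hsx) as Psx.
  pose proof (sigma_pm _ _ _ _ Hsy) as Psy.
  destruct (pos_of_not_exc _ _ _ _ _ _ _ _ Psx Hsvx Hex) as (p1 & p2 & p3).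
  destruct (pos_of_not_exc _ _ _ _ _ _ _ _ Psy Hsvy Hey) as (q1 & q2 & q3).
  destruct Hsvx as (HTx & _ & Hbx). destruct Hsvy as (HTy & _ & Hby).
  assert (Bx : is_bary ax) by (destruct Hbx as (_ & ? & _); auto).
  assert (By : is_bary ay) by (destruct Hby as (_ & ? & _); auto).
  rewrite Hpx in Hpy.
  assert (Hc := f_equal fst Hpy). assert (Hh := f_equal snd Hpy). simpl in Hc, Hh. clear Hpy.
  destruct (face_unique Vc F Tx Ty ax ay WVc HTx HTy Bx p1 p2 p3 By q1 q2 q3 Hc)
    as [<- <-].
  destruct (proj_decomp _ _ _ _ _ _ Hbx) as (lx & Hlx & Ex).
  destruct (proj_decomp _ _ _ _ _ _ Hby) as (ly & Hly & Ey).
  rewrite Ex in Hh at 1. rewrite Ey in Hh at 1.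
  rewrite !vsub_vadd, !norm_scale in Hh by auto.
  rewrite Ex, Ey.
  pose proof (sqrt_pos (dot (w3 V N Tx sgx ax) (w3 V N Tx sgx ax))) as Nx.
  pose proof (sqrt_pos (dot (w3 V N Tx sgy ax) (w3 V N Tx sgy ax))) as Ny.
  fold (vnorm (w3 V N Tx sgx ax)) in Nx. fold (vnorm (w3 V N Tx sgy ax)) in Ny.
  destruct (Req_dec sgx sgy) as [<-|hne].
  - assert (E : lx * vnorm (w3 V N Tx sgx ax) = ly * vnorm (w3 V N Tx sgx ax)).
    { destruct Psx; subst; lra. }
    destruct (Req_dec (vnorm (w3 V N Tx sgx ax)) 0) as [Z|Z].
    + rewrite (scale_zero lx), (scale_zero ly); auto; rewrite Z; ring.
    + assert (lx = ly) by (apply Rmult_eq_reg_r with (vnorm (w3 V N Tx sgx ax)); auto).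
      subst; reflexivity.
  - assert (lx * vnorm (w3 V N Tx sgx ax) = 0 /\ ly * vnorm (w3 V N Tx sgy ax) = 0)
      as [Z1 Z2].
    { destruct Psx, Psy; subst; try lra; split; nra. }
    rewrite (scale_zero _ _ Z1), (scale_zero _ _ Z2); reflexivity.
Qed.
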